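(* Let $\mathcal{M}$ be a saturated model of Presburger arithmetic, $\mathcal{M}_0\preceq\mathcal{M}$ a small elementary submodel, $C\subseteq\mathcal{M}^n$ an open cell definable over $\mathcal{M}_0$, and $a\in C$ with $\dim(a/\mathcal{M}_0)=n$. Then there is an $n$-box $B$ around $a$ with $B\subseteq C$.
   Context: Presburger arithmetic is $\mathrm{Th}(\mathbb{Z},+,-,<,0,1,\{\equiv_n\}_n)$. Cells are defined inductively: a $0$-cell is a point of $\mathrm{dcl}(B)$; a $1$-cell is an infinite set $\{x:\alpha\ \square_1\ x\ \square_2\ \beta,\ x\equiv_N c\}$ with $\alpha,\beta\in\mathrm{dcl}(B)$, $0\le c<N$ integers, $\square_j$ either $\le$ or no condition; given an $(i_1,\dots,i_n)$-cell $C'$, an $(i_1,\dots,i_n,0)$-cell is the graph of a $B$-linear function on $C'$ and an $(i_1,\dots,i_n,1)$-cell is $\{(x,t):x\in C',\ \alpha(x)\ \square_1\ t\ \square_2\ \beta(x),\ t\equiv_N k\}$ with $\alpha,\beta$ $B$-linear on $C'$ and fiber sizes not uniformly bounded. Here a $B$-linear function is $f(x)=\sum_i s_i\frac{x_i-c_i}{k_i}+\gamma$ with integers $s_i,k_i$, $0\le c_i<k_i$, $x_i\equiv_{k_i}c_i$, $\gamma\in\mathrm{dcl}(B)$. The dimension of an $(i_1,\dots,i_n)$-cell is $\sum_j i_j$; a cell in $\mathcal{M}^n$ is open if its dimension is $n$. The dimension of a tuple over $\mathcal{M}_0$ is the size of a maximal dcl-independent (over $\mathcal{M}_0$) subset of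 its coordinates. A box around $p\in\mathcal{M}^n$ is a product $B_1\times\dots\times B_n$ of sets $B_i=\{x:\alpha_i\ \square_1\ x\ \square_2\ \beta_i,\ x\equiv_{N_i}c_i\}$ with $p_i\in B_i$ and $[\alpha_i,p_i]$, $[p_i,\beta_i]$ infinite. *)

(* Defs.v *)
From mathcomp Require Import all_boot all_order all_algebra.
Set Implicit Arguments. Unset Strict Implicit. Unset Printing Implicit Defensive.

Inductive term : Type :=
| TVar of nat | TZero | TOne | TAdd of term & term | TSub of term & term.

Inductive form : Type :=
| FLt of term & term
| FEq of term & term
| FCong of nat & term & term
| FNot of form
| FAnd of form & form
| FOr of form & form
| FEx of nat & form.

Record PStruct := {
  car :> Type;
  p_add : car -> car -> car;
  p_sub : car -> car -> car;
  p_zero : car;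
  p_one : car;
  p_lt : car -> car -> Prop;
  p_cong : nat -> car -> car -> Prop }.

Section Semantics.
Variable M : PStruct.

Definition upd (e : nat -> M) (i : nat) (x : M) : nat -> M :=
  fun j => if j == i then x else e j.

Fixpoint teval (e : nat -> M) (t : term) : M :=
  match t with
  | TVar i => e i
  | TZero => @p_zero M
  | TOne => @p_one M
  | TAdd t1 t2 => @p_add M (teval e t1) (teval e t2)
  | TSub t1 t2 => @p_sub M (teval e t1) (teval e t2)
  end.

Fixpoint satIn (D : M -> Prop) (e : nat -> M) (f : form) : Prop :=
  match f with
  | FLt t1 t2 => @p_lt M (teval e t1) (teval e t2)
  | FEq t1 t2 => teval e t1 = teval e t2
  | FCong n t1 t2 => @p_cong M n (teval e t1) (teval e t2)
  | FNot g => ~ satIn D e g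
  | FAnd g h => satIn D e g /\ satIn D e h
  | FOr g h => satIn D e g \/ satIn D e h
  | FEx i g => exists x, D x /\ satIn D (upd e i x) g
  end.

Definition sat (e : nat -> M) (f : form) : Prop := satIn (fun _ => True) e f.

(* ---------- cardinality: "small" = strictly smaller cardinality than M ---------- *)
Definition small (A : M -> Prop) : Prop :=
  ~ exists g : M -> {x : M | A x}, injective g.

Definition substructure (P : M -> Prop) : Prop :=
  [/\ P (@p_zero M), P (@p_one M),
      (forall x y, P x -> P y -> P (@p_add M x y)) &
      (forall x y, P x -> P y -> P (@p_sub M x y))].

(* P is (the universe of) an elementary substructure: truth in the induced
   substructure (= truth with quantifiers relativized to P) agrees with truth in M
   for all formulas and all assignments into P *)
Definition elem_sub (P : M -> Prop) : Prop :=
  substructure P /\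
  forall (f : form) (e : nat -> M), (forall i, P (e i)) -> (satIn P e f <-> sat e f).

(* a partial 1-type over A: a set of formulas phi(v_0; params) where the parameters
   are given by an assignment e with values in A on the variables other than v_0 *)
Definition finsat (Sig : form -> (nat -> M) -> Prop) : Prop :=
  forall (m : nat) (phis : 'I_m -> form) (es : 'I_m -> nat -> M),
    (forall j, Sig (phis j) (es j)) ->
    exists x, forall j, sat (upd (es j) 0 x) (phis j).

Definition Saturated : Prop :=
  forall (A : M -> Prop), small A ->
  forall Sig : form -> (nat -> M) -> Prop,
    (forall f e, Sig f e -> forall i, i <> 0%N -> A (e i)) ->
    finsat Sig ->
    exists x, forall f e, Sig f e -> sat (upd e 0 x) f.

Definition dcl (A : M -> Prop) (x : M) : Prop :=
  exists (f : form) (e : nat -> M),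
    (forall i, i <> 0%N -> A (e i)) /\
    forall y, sat (upd e 0 y) f <-> y = x.

Definition dcl_indep (P : M -> Prop) (n : nat) (a : 'I_n -> M) (S : {set 'I_n}) :=
  forall i, i \in S ->
    ~ dcl (fun x => P x \/ exists j, [/\ j \in S, j != i & x = a j]) (a i).

(* dim(a/P) = d : d is the size of a maximal dcl-independent subset of coordinates *)
Definition dim_eq (P : M -> Prop) (n : nat) (a : 'I_n -> M) (d : nat) : Prop :=
  exists S : {set 'I_n},
    [/\ dcl_indep P a S,
        (forall S' : {set 'I_n}, S \subset S' -> dcl_indep P a S' -> S' = S) &
        #|S| = d].

Definition p_le (x y : M) : Prop := @p_lt M x y \/ x = y.

Definition nmul (k : nat) (x : M) : M := iter k (@p_add M x) (@p_zero M).

Definition zmul (z : int) (x : M) : M :=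
  match z with
  | Posz k => nmul k x
  | Negz k => @p_sub M (@p_zero M) (nmul k.+1 x)
  end.

Definition cst (c : nat) : M := nmul c (@p_one M).

Definition atmost (m : nat) (S : M -> Prop) : Prop :=
  forall g : 'I_m.+1 -> M, injective g -> ~ (forall i, S (g i)).

Definition infinite_set (S : M -> Prop) : Prop := forall m, ~ atmost m S.

(* f(x) = sum_i s_i (x_i - c_i)/k_i + gamma *)
Record linfun (n : nat) := LinFun {
  lf_s : 'I_n -> int;
  lf_k : 'I_n -> nat;
  lf_c : 'I_n -> nat;
  lf_g : M }.

Definition linval n (f : linfun n) (x : 'I_n -> M) (v : M) : Prop :=
  exists y : 'I_n -> M,
    (forall i, nmul (lf_k f i) (y i) = @p_sub M (x i) (cst (lf_c f i))) /\
    v = @p_add M (\big[@p_add M / @p_zero M]_(i < n) zmul (lf_s f i) (y i)) (lf_g f).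

Definition is_Blin (B : M -> Prop) n (C : ('I_n -> M) -> Prop) (f : linfun n) : Prop :=
  [/\ forall i, (0 < lf_k f i)%N,
      forall i, (lf_c f i < lf_k f i)%N,
      dcl B (lf_g f) &
      forall x, C x -> forall i, @p_cong M (lf_k f i) (x i) (cst (lf_c f i))].

Definition tinit n (z : 'I_n.+1 -> M) : 'I_n -> M := fun i => z (widen_ord (leqnSn n) i).
Definition tlast n (z : 'I_n.+1 -> M) : M := z ord_max.

(* fiber of an (...,1)-cell above x; lo/hi = whether the bound is present *)
Definition strip n (al be : linfun n) (lo hi : bool) (N k : nat) (x : 'I_n -> M) (t : M) :=
  [/\ lo -> exists v, linval al x v /\ p_le v t,
      hi -> exists v, linval be x v /\ p_le t v &
      @p_cong M N t (cst k)].

(* cells over B in M^n, indexed by their type (i_1,...,i_n) as a seq bool.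
   The base case is the (unique, trivial) cell M^0; this yields exactly the 0-cells
   and 1-cells of the paper in M^1. *)
Inductive cell (B : M -> Prop) : forall n : nat, seq bool -> (('I_n -> M) -> Prop) -> Prop :=
| cell_nil : cell B [::] (fun _ : 'I_0 -> M => True)
| cell_graph n s (C : ('I_n -> M) -> Prop) (f : linfun n) :
    cell B s C -> is_Blin B C f ->
    cell B (rcons s false) (fun z : 'I_n.+1 -> M => C (tinit z) /\ linval f (tinit z) (tlast z))
| cell_strip n s (C : ('I_n -> M) -> Prop) (al be : linfun n) (lo hi : bool) (N k : nat) :
    cell B s C -> is_Blin B C al -> is_Blin B C be ->
    (0 < N)%N -> (k < N)%N ->
    ~ (exists m, forall x, C x -> atmost m (strip al be lo hi N k x)) ->
    cell B (rcons s true) (fun z : 'I_n.+1 -> M => C (tinit z) /\ strip al be lo hi N k (tinit z) (tlast z)).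

Definition open_cell (B : M -> Prop) (n : nat) (C : ('I_n -> M) -> Prop) : Prop :=
  cell B (nseq n true) C.

Definition box_around (n : nat) (p : 'I_n -> M) (Bx : ('I_n -> M) -> Prop) : Prop :=
  exists (al be : 'I_n -> M) (lo hi : 'I_n -> bool) (N c : 'I_n -> nat),
    let Bi i x := [/\ lo i -> p_le (al i) x, hi i -> p_le x (be i) &
                      @p_cong M (N i) x (cst (c i))] in
    [/\ forall i, (0 < N i)%N /\ (c i < N i)%N,
        forall i, Bi i (p i),
        forall i, lo i -> infinite_set (fun x => p_le (al i) x /\ p_le x (p i)),
        forall i, hi i -> infinite_set (fun x => p_le (p i) x /\ p_le x (be i)) &
        forall x, Bx x <-> forall i, Bi i (x i)].

End Semantics.

Definition Zstr : PStruct :=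
  {| car := int;
     p_add := fun x y => (x + y)%R;
     p_sub := fun x y => (x - y)%R;
     p_zero := 0%R;
     p_one := 1%R;
     p_lt := fun x y => (x < y)%R;
     p_cong := fun n x y => (n%:Z %| (x - y)%R)%Z |}.

(* M |= Th(Z): every formula valid in Z is valid in M (universal closures) *)
Definition IsPresModel (M : PStruct) : Prop :=
  forall f : form, (forall e : nat -> Zstr, sat e f) -> forall e : nat -> M, sat e f.

(* Main.v *)
Require Import Defs.
From mathcomp Require Import all_boot all_order all_algebra.
From mathcomp Require Import zify.
From Stdlib Require Import Classical FunctionalExtensionality.
Set Implicit Arguments. Unset Strict Implicit. Unset Printing Implicit Defensive.
Import Order.TTheory GRing.Theory Num.Theory.


Definition tnmul (k : nat) (t : Defs.term) : Defs.term := iter k (TAdd t) TZero.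
Definition tcst (c : nat) : term := tnmul c TOne.
Definition tzmul (z : int) (t : Defs.term) : Defs.term :=
  match z with Posz k => tnmul k t | Negz k => TSub TZero (tnmul k.+1 t) end.
Notation fle t1 t2 := (FOr (FLt t1 t2) (FEq t1 t2)).
Notation fimp p q := (FOr (FNot p) q).
Notation V := TVar.

Lemma teval_nmul (M : PStruct) e k t : teval e (tnmul k t) = nmul k (teval (M:=M) e t).
Proof. by elim: k => //= k ->. Qed.
Lemma teval_cst (M : PStruct) e c : teval e (tcst c) = cst M c.
Proof. by rewrite /tcst teval_nmul. Qed.
Lemma teval_zmul (M : PStruct) e z t : teval e (tzmul z t) = zmul z (teval (M:=M) e t).
Proof. by case: z => k /=; rewrite teval_nmul. Qed.

Lemma nmulZ k (x : Zstr) : nmul k x = (x *+ k)%R.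
Proof. by elim: k => //= k IH; rewrite /nmul /= -/(nmul k x) IH mulrS. Qed.
Lemma cstZ c : cst Zstr c = (c%:R)%R.
Proof. by rewrite /cst nmulZ. Qed.
Lemma zmulZ z (x : Zstr) : zmul z x = (x *~ z)%R.
Proof. by case: z => k /=; rewrite nmulZ // NegzE -mulrS mulrNz sub0r. Qed.

Definition ev (M : PStruct) (l : seq M) : nat -> M := fun i => nth (p_zero M) l i.

Lemma impl_or (P Q : Prop) : (P -> Q) -> ~ P \/ Q.
Proof. by move=> h; case: (classic P) => p; [right; apply: h|left]. Qed.
Lemma or_impl (P Q : Prop) : ~ P \/ Q -> P -> Q.
Proof. by case. Qed.

Ltac zsimp := rewrite /sat /= ?teval_nmul ?teval_cst ?teval_zmul ?nmulZ ?cstZ ?zmulZ /=.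

Fixpoint tren (s : nat -> nat) (t : Defs.term) : Defs.term :=
  match t with
  | TVar i => TVar (s i) | TZero => TZero | TOne => TOne
  | TAdd a b => TAdd (tren s a) (tren s b) | TSub a b => TSub (tren s a) (tren s b) end.
Fixpoint fren (s : nat -> nat) (f : Defs.form) : Defs.form :=
  match f with
  | FLt a b => FLt (tren s a) (tren s b)
  | FEq a b => FEq (tren s a) (tren s b)
  | FCong n a b => FCong n (tren s a) (tren s b)
  | FNot g => FNot (fren s g)
  | FAnd g h => FAnd (fren s g) (fren s h)
  | FOr g h => FOr (fren s g) (fren s h)
  | FEx i g => FEx (s i) (fren s g) end.

Lemma teval_ren (M : PStruct) s e t : teval (M:=M) e (tren s t) = teval (e \o s) t.
Proof. by elim: t => //= a -> b ->. Qed.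

Lemma sat_ren (M : PStruct) s (D : M -> Prop) : injective s ->
  forall f e, satIn D e (fren s f) <-> satIn D (e \o s) f.
Proof.
move=> inj; elim=> /=.
- by move=> a b e; rewrite !teval_ren.
- by move=> a b e; rewrite !teval_ren.
- by move=> n a b e; rewrite !teval_ren.
- by move=> g IH e; rewrite IH.
- by move=> g IHg h IHh e; rewrite IHg IHh.
- by move=> g IHg h IHh e; rewrite IHg IHh.
- move=> i g IH e.
  have E : forall x, (upd e (s i) x \o s) = upd (e \o s) i x.
    move=> x; apply: functional_extensionality => j; rewrite /upd /=.
    case: (eqVneq j i) => [->|ne]; first by rewrite !eqxx.
    have : s j != s i by apply/eqP => /inj /eqP; rewrite (negbTE ne).
    by move/negbTE => ->.
  by split=> -[x [Dx H]]; exists x; split=> //; move: H; rewrite IH E.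
Qed.


Section Dcl.
Variable M : PStruct.

Lemma dcl_in (A : M -> Prop) x : A x -> dcl A x.
Proof.
move=> Ax; exists (FEq (V 0) (V 1)), (fun _ => x); split; first by [].
move=> y.
by rewrite /sat /= /upd /=.
Qed.

Lemma dcl_mono (A B : M -> Prop) x : (forall y, A y -> B y) -> dcl A x -> dcl B x.
Proof. by move=> AB [f [e [He H]]]; exists f, e; split=> // i /He /AB. Qed.

Lemma upd_same (e : nat -> M) i : upd e i (e i) = e.
Proof. by apply: functional_extensionality => j; rewrite /upd; case: eqP => // ->. Qed.

Lemma dcl_op2 (A : M -> Prop) x1 x2 z (chi : Defs.form) :
  dcl A x1 -> dcl A x2 ->
  (forall e : nat -> M, e 1%N = x1 -> e 2%N = x2 -> (sat e chi <-> e 0%N = z)) ->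
  dcl A z.
Proof.
move=> [f1 [e1 [A1 H1]]] [f2 [e2 [A2 H2]]] Hchi.
pose s1 := fun v : nat => (3 * v + 1)%N.
pose s2 := fun v : nat => (3 * v + 2)%N.
have i1 : injective s1 by move=> a b; rewrite /s1; lia.
have i2 : injective s2 by move=> a b; rewrite /s2; lia.
pose E := fun v : nat => if (v %% 3 == 1)%N && (v != 1)%N then e1 (v %/ 3)%N
   else if (v %% 3 == 2)%N && (v != 2)%N then e2 (v %/ 3)%N else e1 1%N.
exists (FEx 1 (FEx 2 (FAnd (fren s1 f1) (FAnd (fren s2 f2) chi)))), E.
split.
  move=> i i0; rewrite /E.
  case: ifP => [/andP [h1 h2]|_]; first by apply: A1; lia.
  case: ifP => [/andP [h1 h2]|_]; first by apply: A2; lia.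
  by apply: A1.
move=> y.
have K1 : forall u1 u2, (upd (upd (upd E 0 y) 1 u1) 2 u2) \o s1 = upd e1 0 u1.
  move=> u1 u2; apply: functional_extensionality => j; rewrite /upd /s1 /E /=.
  case: (posnP j) => [->//|jp].
  have -> : (3 * j + 1 == 2)%N = false by lia.
  have -> : (3 * j + 1 == 1)%N = false by lia.
  have -> : (3 * j + 1 == 0)%N = false by lia.
  have -> : ((3 * j + 1) %% 3 == 1)%N by lia.
  have -> : ((3 * j + 1) %/ 3)%N = j by lia.
  by [].
have K2 : forall u1 u2, (upd (upd (upd E 0 y) 1 u1) 2 u2) \o s2 = upd e2 0 u2.
  move=> u1 u2; apply: functional_extensionality => j; rewrite /upd /s2 /E /=.
  case: (posnP j) => [->//|jp].
  have -> : (3 * j + 2 == 2)%N = false by lia.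
  have -> : (3 * j + 2 == 1)%N = false by lia.
  have -> : (3 * j + 2 == 0)%N = false by lia.
  have -> : ((3 * j + 2) %% 3 == 1)%N = false by lia.
  have -> : ((3 * j + 2) %% 3 == 2)%N by lia.
  have -> : ((3 * j + 2) %/ 3)%N = j by lia.
  by [].
rewrite /sat /=; split.
  move=> [u1 [_ [u2 [_ [S1 [S2 S3]]]]]].
  move: S1 S2; rewrite (sat_ren _ i1) (sat_ren _ i2) K1 K2.
  move=> /H1 U1 /H2 U2.
  have := (Hchi (upd (upd (upd E 0 y) 1 u1) 2 u2)); rewrite /upd /=.
  by move=> h; apply/h.
move=> yz; exists x1; split=> //; exists x2; split=> //.
rewrite (sat_ren _ i1) (sat_ren _ i2) K1 K2; split; first by apply/H1.
split; first by apply/H2.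
by have := (Hchi (upd (upd (upd E 0 y) 1 x1) 2 x2)); rewrite /upd /= => h; apply/h.
Qed.

End Dcl.


Section Tr.
Variable M : PStruct.
Hypothesis HM : IsPresModel M.
Local Notation "x + y" := (@p_add M x y).
Local Notation "x - y" := (@p_sub M x y).
Local Notation "x < y" := (@p_lt M x y).
Local Notation "x <= y" := (@p_le M x y).
Local Notation "0" := (@p_zero M).

Lemma tr (F : Defs.form) (l : seq M) : (forall e : nat -> Zstr, sat e F) -> sat (ev l) F.
Proof. by move=> h; apply: HM. Qed.

Ltac ztac := move=> e; zsimp; try (apply: impl_or => ?); lia.
Ltac mtac := rewrite /sat /= ?teval_nmul ?teval_cst ?teval_zmul /=.

Lemma m_total (x y : M) : x < y \/ y <= x.
Proof.
have: sat (ev [:: x; y]) (FOr (FLt (V 0) (V 1)) (fle (V 1) (V 0))) by apply: tr; ztac.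
by mtac.
Qed.

Lemma m_le_trans (x y z : M) : x <= y -> y <= z -> x <= z.
Proof.
have: sat (ev [:: x; y; z]) (fimp (FAnd (fle (V 0) (V 1)) (fle (V 1) (V 2))) (fle (V 0) (V 2))).
  by apply: tr; ztac.
by mtac => -[] // h a b; exfalso; apply: h.
Qed.

Lemma m_nmul_inj k (u w : M) : (0 < k)%N -> nmul k u = nmul k w -> u = w.
Proof.
move=> kp.
have: sat (ev [:: u; w]) (fimp (FEq (tnmul k (V 0)) (tnmul k (V 1))) (FEq (V 0) (V 1))).
  by apply: tr; move=> e; zsimp; apply: impl_or => ?; nia.
by mtac => -[] // h a; exfalso; apply: h.
Qed.


Lemma m_div_exists k c (x : M) : p_cong k x (cst M c) -> exists y, nmul k y = x - cst M c.
Proof.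
have: sat (ev [:: x]) (fimp (FCong k (V 0) (tcst c)) (FEx 1 (FEq (tnmul k (V 1)) (TSub (V 0) (tcst c))))).
  apply: tr => e; zsimp; apply: impl_or => /dvdzP [q hq]; exists q; split=> //.
  rewrite teval_nmul teval_cst nmulZ cstZ /upd /=; nia.
mtac => -[h a|]; first by exfalso; apply: h.
move=> [y [_ E]] _; exists y; move: E; rewrite teval_nmul teval_cst /upd /=.
by [].
Qed.

Lemma m_coord_bound k c (y ya x a d : M) : (0 < k)%N ->
  nmul k y = x - cst M c -> nmul k ya = a - cst M c -> a - d <= x -> x <= a + d ->
  ya - d <= y /\ y <= ya + d.
Proof.
move=> kp.
have: sat (ev [:: y; ya; x; a; d]) (fimp (FAnd (FEq (tnmul k (V 0)) (TSub (V 2) (tcst c)))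
   (FAnd (FEq (tnmul k (V 1)) (TSub (V 3) (tcst c))) (FAnd (fle (TSub (V 3) (V 4)) (V 2)) (fle (V 2) (TAdd (V 3) (V 4))))))
   (FAnd (fle (TSub (V 1) (V 4)) (V 0)) (fle (V 0) (TAdd (V 1) (V 4))))).
  by apply: tr => e; zsimp; apply: impl_or => ?; nia.
by mtac => -[] // h a1 a2 a3 a4; exfalso; apply: h.
Qed.

Lemma m_zmul_bound (s : int) (y ya d : M) : ya - d <= y -> y <= ya + d ->
  zmul s ya - nmul `|s|%N d <= zmul s y /\ zmul s y <= zmul s ya + nmul `|s|%N d.
Proof.
have: sat (ev [:: y; ya; d]) (fimp (FAnd (fle (TSub (V 1) (V 2)) (V 0)) (fle (V 0) (TAdd (V 1) (V 2))))
   (FAnd (fle (TSub (tzmul s (V 1)) (tnmul `|s|%N (V 2))) (tzmul s (V 0)))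
         (fle (tzmul s (V 0)) (TAdd (tzmul s (V 1)) (tnmul `|s|%N (V 2)))))).
  apply: tr => e; zsimp; apply: impl_or => ?.
  case: s => k /=; nia.
by mtac => -[] // h a1 a2; exfalso; apply: h.
Qed.


Ltac mfin := mtac; let H := fresh "H" in case=> H; [exfalso; apply: H; repeat split; assumption | exact H].

Lemma m_sum_bound (A A' B B' P Q : M) : A - P <= A' -> A' <= A + P -> B - Q <= B' -> B' <= B + Q ->
  (A + B) - (P + Q) <= A' + B' /\ A' + B' <= (A + B) + (P + Q).
Proof.
move=> h1 h2 h3 h4.
have: sat (ev [:: A; A'; B; B'; P; Q]) (fimp (FAnd (fle (TSub (V 0) (V 4)) (V 1)) (FAnd (fle (V 1) (TAdd (V 0) (V 4)))
   (FAnd (fle (TSub (V 2) (V 5)) (V 3)) (fle (V 3) (TAdd (V 2) (V 5))))))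
  (FAnd (fle (TSub (TAdd (V 0) (V 2)) (TAdd (V 4) (V 5))) (TAdd (V 1) (V 3)))
        (fle (TAdd (V 1) (V 3)) (TAdd (TAdd (V 0) (V 2)) (TAdd (V 4) (V 5)))))).
  by apply: tr; ztac.
by mfin.
Qed.

Lemma m_nmul_add p q (x : M) : nmul (p + q) x = nmul p x + nmul q x.
Proof.
have: sat (ev [:: x]) (FEq (tnmul (p + q) (V 0)) (TAdd (tnmul p (V 0)) (tnmul q (V 0)))).
  by apply: tr => e; zsimp; rewrite mulrnDr.
by mtac.
Qed.

Lemma m_base : 0 - 0 <= 0 /\ 0 <= 0 + 0.
Proof.
have: sat (@ev M [::]) (FAnd (fle (TSub TZero TZero) TZero) (fle TZero (TAdd TZero TZero))).
  by apply: tr; ztac.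
by mtac.
Qed.

Lemma m_final_lo (Sa Sx P d g an xn : M) : Sa - P <= Sx -> Sx <= Sa + P ->
  d + P <= an - (Sa + g) -> an - d <= xn -> Sx + g <= xn.
Proof.
move=> h1 h2 h3 h4.
have: sat (ev [:: Sa; Sx; P; d; g; an; xn]) (fimp (FAnd (fle (TSub (V 0) (V 2)) (V 1)) (FAnd (fle (V 1) (TAdd (V 0) (V 2)))
   (FAnd (fle (TAdd (V 3) (V 2)) (TSub (V 5) (TAdd (V 0) (V 4)))) (fle (TSub (V 5) (V 3)) (V 6)))))
  (fle (TAdd (V 1) (V 4)) (V 6))).
  by apply: tr; ztac.
by mfin.
Qed.

Lemma m_final_hi (Sa Sx P d g an xn : M) : Sa - P <= Sx -> Sx <= Sa + P ->
  d + P <= (Sa + g) - an -> xn <= an + d -> xn <= Sx + g.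
Proof.
move=> h1 h2 h3 h4.
have: sat (ev [:: Sa; Sx; P; d; g; an; xn]) (fimp (FAnd (fle (TSub (V 0) (V 2)) (V 1)) (FAnd (fle (V 1) (TAdd (V 0) (V 2)))
   (FAnd (fle (TAdd (V 3) (V 2)) (TSub (TAdd (V 0) (V 4)) (V 5))) (fle (V 6) (TAdd (V 5) (V 3))))))
  (fle (V 6) (TAdd (V 1) (V 4)))).
  by apply: tr; ztac.
by mfin.
Qed.

Lemma m_gap (v w Z : M) : v + Z < w -> Z < w - v.
Proof.
move=> h1.
have: sat (ev [:: v; w; Z]) (fimp (FLt (TAdd (V 0) (V 2)) (V 1)) (FLt (V 2) (TSub (V 1) (V 0)))).
  by apply: tr; ztac.
by mfin.
Qed.

Lemma m_div K (g : M) : (0 < K)%N -> exists q, nmul K q <= g /\ g < nmul K q + cst M K.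
Proof.
move=> Kp.
have: sat (ev [:: g]) (FEx 1 (FAnd (fle (tnmul K (V 1)) (V 0)) (FLt (V 0) (TAdd (tnmul K (V 1)) (tcst K))))).
  apply: tr => e; rewrite /sat /=; exists (e 0%N %/ K)%Z; split=> //.
  rewrite ?teval_nmul ?teval_cst ?nmulZ ?cstZ /upd /=.
  have h1 := divz_eq (e 0%N) K.
  have h2 : (0 <= (e 0%N %% K)%Z)%R by apply: modz_ge0; rewrite -lt0n.
  have h3 : ((e 0%N %% K)%Z < K)%R by apply: ltz_pmod; rewrite ltz_nat.
  move: h1 h2 h3; set r := (e 0%N %% K)%Z; set q := (e 0%N %/ K)%Z => h1 h2 h3.
  split; last by nia.
  by case: (ltrP (q *+ K)%R (e 0%N)) => h; [left|right]; nia.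
mtac => -[q [_ [h1 h2]]]; exists q; move: h1 h2; rewrite ?teval_nmul ?teval_cst /upd /=.
by [].
Qed.


Lemma m_q_bound K m (q : M) : q <= cst M m -> nmul K q + cst M K <= cst M (K * m + K).
Proof.
move=> h1.
have: sat (ev [:: q]) (fimp (fle (V 0) (tcst m)) (fle (TAdd (tnmul K (V 0)) (tcst K)) (tcst (K * m + K)))).
  apply: tr => e; rewrite /sat /= ?teval_nmul ?teval_cst ?nmulZ ?cstZ /=; apply: impl_or => ?.
  rewrite natrD natrM; nia.
mtac; rewrite ?teval_nmul ?teval_cst.
let H := fresh "H" in case=> H; [exfalso; apply: H; repeat split; assumption | exact H].
Qed.

Lemma m_lt_lt_le_false (X g Y : M) : X < g -> g < Y -> Y <= X -> False.
Proof.
move=> h1 h2 h3.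
have: sat (ev [:: X; g; Y]) (FNot (FAnd (FLt (V 0) (V 1)) (FAnd (FLt (V 1) (V 2)) (fle (V 2) (V 0))))).
  by apply: tr => e; zsimp; move=> ?; lia.
by mtac; apply.
Qed.

Lemma m_nmul_mono K (d q : M) : d <= q -> nmul K d <= nmul K q.
Proof.
move=> h1.
have: sat (ev [:: d; q]) (fimp (fle (V 0) (V 1)) (fle (tnmul K (V 0)) (tnmul K (V 1)))).
  apply: tr => e; zsimp; apply: impl_or => ?.
  by case: (ltrP (e 0%N *+ K)%R (e 1%N *+ K)%R) => h; [left|right]; nia.
mtac; rewrite ?teval_nmul.
let H := fresh "H" in case=> H; [exfalso; apply: H; repeat split; assumption | exact H].
Qed.

Lemma m_enum0 (v w : M) : v <= w -> w <= v + 0 -> w = v + 0.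
Proof.
move=> h1 h2.
have: sat (ev [:: v; w]) (fimp (FAnd (fle (V 0) (V 1)) (fle (V 1) (TAdd (V 0) TZero))) (FEq (V 1) (TAdd (V 0) TZero))).
  by apply: tr; ztac.
by mfin.
Qed.

Lemma m_enumS (v w Z : M) : w <= v + (p_one M + Z) -> w = v + (p_one M + Z) \/ w <= v + Z.
Proof.
move=> h1.
have: sat (ev [:: v; w; Z]) (fimp (fle (V 1) (TAdd (V 0) (TAdd TOne (V 2))))
   (FOr (FEq (V 1) (TAdd (V 0) (TAdd TOne (V 2)))) (fle (V 1) (TAdd (V 0) (V 2))))).
  by apply: tr; ztac.
by mfin.
Qed.

Lemma m_sub_of_add (v w Z : M) : v = w + Z -> w = v - Z.
Proof.
move=> h1.
have: sat (ev [:: v; w; Z]) (fimp (FEq (V 0) (TAdd (V 1) (V 2))) (FEq (V 1) (TSub (V 0) (V 2)))).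
  by apply: tr; ztac.
by mfin.
Qed.

Lemma m_box_lo (Z d a : M) : Z < d -> 0 <= Z -> a - d <= a - Z /\ a - Z <= a.
Proof.
move=> h1 h2.
have: sat (ev [:: Z; d; a]) (fimp (FAnd (FLt (V 0) (V 1)) (fle TZero (V 0)))
   (FAnd (fle (TSub (V 2) (V 1)) (TSub (V 2) (V 0))) (fle (TSub (V 2) (V 0)) (V 2)))).
  by apply: tr; ztac.
by mfin.
Qed.

Lemma m_box_hi (Z d a : M) : Z < d -> 0 <= Z -> a <= a + Z /\ a + Z <= a + d.
Proof.
move=> h1 h2.
have: sat (ev [:: Z; d; a]) (fimp (FAnd (FLt (V 0) (V 1)) (fle TZero (V 0)))
   (FAnd (fle (V 2) (TAdd (V 2) (V 0))) (fle (TAdd (V 2) (V 0)) (TAdd (V 2) (V 1))))).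
  by apply: tr; ztac.
by mfin.
Qed.

Lemma m_cst_nonneg j : 0 <= cst M j.
Proof.
have: sat (@ev M [::]) (fle TZero (tcst j)).
  by apply: tr => e; zsimp; lia.
by mtac.
Qed.

Lemma m_cst_lt j j' : (j < j')%N -> cst M j < cst M j'.
Proof.
move=> h.
have: sat (@ev M [::]) (FLt (tcst j) (tcst j')).
  by apply: tr => e; zsimp; rewrite ltr_nat.
by mtac.
Qed.

Lemma m_sub_inj (a Z W : M) : a - Z = a - W -> Z < W -> False.
Proof.
move=> h1 h2.
have: sat (ev [:: a; Z; W]) (FNot (FAnd (FEq (TSub (V 0) (V 1)) (TSub (V 0) (V 2))) (FLt (V 1) (V 2)))).
  by apply: tr => e; zsimp; move=> ?; lia.
by mtac; apply.
Qed.

Lemma m_add_inj (a Z W : M) : a + Z = a + W -> Z < W -> False.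
Proof.
move=> h1 h2.
have: sat (ev [:: a; Z; W]) (FNot (FAnd (FEq (TAdd (V 0) (V 1)) (TAdd (V 0) (V 2))) (FLt (V 1) (V 2)))).
  by apply: tr => e; zsimp; move=> ?; lia.
by mtac; apply.
Qed.

Lemma m_box_mem (d a : M) : 0 < d -> a - d <= a /\ a <= a + d.
Proof.
move=> h1.
have: sat (ev [:: d; a]) (fimp (FLt TZero (V 0)) (FAnd (fle (TSub (V 1) (V 0)) (V 1)) (fle (V 1) (TAdd (V 1) (V 0))))).
  by apply: tr; ztac.
by mfin.
Qed.

Lemma m_box_mono (d d' a x : M) : d <= d' -> a - d <= x -> x <= a + d -> a - d' <= x /\ x <= a + d'.
Proof.
move=> h1 h2 h3.
have: sat (ev [:: d; d'; a; x]) (fimp (FAnd (fle (V 0) (V 1)) (FAnd (fle (TSub (V 2) (V 0)) (V 3)) (fle (V 3) (TAdd (V 2) (V 0)))))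
   (FAnd (fle (TSub (V 2) (V 1)) (V 3)) (fle (V 3) (TAdd (V 2) (V 1))))).
  by apply: tr; ztac.
by mfin.
Qed.

End Tr.


Section Mid.
Variable M : PStruct.
Hypothesis HM : IsPresModel M.
Local Notation "x + y" := (@p_add M x y).
Local Notation "x - y" := (@p_sub M x y).
Local Notation "x < y" := (@p_lt M x y).
Local Notation "x <= y" := (@p_le M x y).
Local Notation "0" := (@p_zero M).

Definition nonstd (d : M) := forall m, cst M m < d.

Lemma m_enum m : forall u w : M, u <= w -> w <= u + cst M m -> exists d, w = u + cst M d.
Proof.
elim: m => [|m IH] u w h1 h2.
  by exists 0%N; apply: m_enum0.
case: (m_enumS HM h2) => h; first by exists m.+1.
exact: IH.
Qed.

Section D.
Variable A : M -> Prop.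

Lemma dcl_add_cst d (v : M) : dcl A v -> dcl A (v + cst M d).
Proof.
move=> h; apply: (dcl_op2 (chi := FEq (V 0) (TAdd (V 1) (tcst d))) h h).
by move=> e h1 h2; rewrite /sat /= teval_cst h1.
Qed.

Lemma dcl_sub_cst d (v : M) : dcl A v -> dcl A (v - cst M d).
Proof.
move=> h; apply: (dcl_op2 (chi := FEq (V 0) (TSub (V 1) (tcst d))) h h).
by move=> e h1 h2; rewrite /sat /= teval_cst h1.
Qed.

Lemma dcl_add (x y : M) : dcl A x -> dcl A y -> dcl A (x + y).
Proof.
move=> h h'; apply: (dcl_op2 (chi := FEq (V 0) (TAdd (V 1) (V 2))) h h').
by move=> e h1 h2; rewrite /sat /= h1 h2.
Qed.

Lemma dcl_zmul s (x : M) : dcl A x -> dcl A (zmul s x).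
Proof.
move=> h; apply: (dcl_op2 (chi := FEq (V 0) (tzmul s (V 1))) h h).
by move=> e h1 h2; rewrite /sat /= teval_zmul /= h1.
Qed.

Lemma dcl_div k c (x y : M) : (0 < k)%N -> nmul k y = x - cst M c -> dcl A x -> dcl A y.
Proof.
move=> kp hy h; apply: (dcl_op2 (chi := FEq (tnmul k (V 0)) (TSub (V 1) (tcst c))) h h).
move=> e h1 h2; rewrite /sat /= ?teval_nmul ?teval_cst /= h1; split.
  by rewrite -hy => /(m_nmul_inj HM kp).
by move=> ->.
Qed.

Lemma dcl_big n (F : 'I_n -> M) : dcl A 0 -> (forall i, dcl A (F i)) ->
  dcl A (\big[@p_add M / @p_zero M]_(i < n) F i).
Proof.
move=> h0; elim: n F => [|n IH] F hF; first by rewrite big_ord0.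
rewrite big_ord_recl /=; apply: dcl_add => //; exact: IH.
Qed.

Lemma gap_lo (v w : M) : dcl A v -> ~ dcl A w -> v <= w -> forall m, v + cst M m < w.
Proof.
move=> hv hw h m; case: (m_total HM (v + cst M m) w) => // h2.
have [d hd] := m_enum h h2.
by exfalso; apply: hw; rewrite hd; apply: dcl_add_cst.
Qed.

Lemma gap_hi (v w : M) : dcl A v -> ~ dcl A w -> w <= v -> forall m, w + cst M m < v.
Proof.
move=> hv hw h m; case: (m_total HM (w + cst M m) v) => // h2.
have [d hd] := m_enum h h2.
by exfalso; apply: hw; rewrite (m_sub_of_add HM hd); apply: dcl_sub_cst.
Qed.
End D.

Lemma nonstd_div K (g : M) : (0 < K)%N -> nonstd g -> exists q, nonstd q /\ nmul K q <= g.
Proof.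
move=> Kp hg; have [q [h1 h2]] := m_div HM g Kp.
exists q; split => // m.
case: (m_total HM (cst M m) q) => // h3.
have h4 := m_q_bound HM K h3.
by exfalso; apply: (m_lt_lt_le_false HM (hg (K * m + K)%N) h2 h4).
Qed.

Lemma nonstd_min (d1 d2 : M) : nonstd d1 -> nonstd d2 -> exists d, [/\ nonstd d, d <= d1 & d <= d2].
Proof.
move=> h1 h2; case: (m_total HM d1 d2) => h.
  by exists d1; split => //; [right|left].
by exists d2; split => //; right.
Qed.

Lemma lin_bound n (s : 'I_n -> int) (y ya : 'I_n -> M) (d : M) :
  (forall i, ya i - d <= y i /\ y i <= ya i + d) ->
  (\big[@p_add M / 0]_(i < n) zmul (s i) (ya i)) - nmul (\sum_(i < n) `|s i|)%N d
     <= \big[@p_add M / 0]_(i < n) zmul (s i) (y i) /\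
  \big[@p_add M / 0]_(i < n) zmul (s i) (y i) <=
  (\big[@p_add M / 0]_(i < n) zmul (s i) (ya i)) + nmul (\sum_(i < n) `|s i|)%N d.
Proof.
elim: n s y ya => [|n IH] s y ya hb.
  by rewrite !big_ord0; apply: (m_base HM).
rewrite !big_ord_recl /= m_nmul_add //.
have [h1 h2] := IH (fun i => s (lift ord0 i)) (fun i => y (lift ord0 i))
   (fun i => ya (lift ord0 i)) (fun i => hb _).
have [h3 h4] := hb ord0.
have [h5 h6] := m_zmul_bound HM (s ord0) h3 h4.
exact: m_sum_bound.
Qed.

End Mid.


Section Main.
Variable M : PStruct.
Hypothesis HM : IsPresModel M.
Local Notation "x + y" := (@p_add M x y).
Local Notation "x - y" := (@p_sub M x y).
Local Notation "x < y" := (@p_lt M x y).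
Local Notation "x <= y" := (@p_le M x y).
Local Notation "0" := (@p_zero M).

Definition Sf n (f : Defs.linfun M n) := (\sum_(i < n) `|lf_s f i|)%N.

Lemma linval_near n (f : Defs.linfun M n) B (C' : ('I_n -> M) -> Prop) (x a : 'I_n -> M) v d :
  is_Blin B C' f -> C' x -> linval f a v -> (forall i, a i - d <= x i /\ x i <= a i + d) ->
  exists v' Sa Sx, [/\ linval f x v', v = Sa + lf_g f, v' = Sx + lf_g f,
    Sa - nmul (Sf f) d <= Sx & Sx <= Sa + nmul (Sf f) d].
Proof.
move=> [kp _ _ hc] Cx [ya [hya ->]] hb.
have [y hy] : exists y : 'I_n -> M, forall i, nmul (lf_k f i) (y i) = x i - cst M (lf_c f i).
  apply: (@fin_all_exists _ (fun _ => car M) (fun i yi => nmul (lf_k f i) yi = x i - cst M (lf_c f i))) => i; apply: (m_div_exists HM); exact: hc.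
exists (\big[@p_add M / 0]_(i < n) zmul (lf_s f i) (y i) + lf_g f).
exists (\big[@p_add M / 0]_(i < n) zmul (lf_s f i) (ya i)).
exists (\big[@p_add M / 0]_(i < n) zmul (lf_s f i) (y i)).
have hb' : forall i, ya i - d <= y i /\ y i <= ya i + d.
  move=> i; have [h1 h2] := hb i.
  exact: (m_coord_bound HM (kp i) (hy i) (hya i) h1 h2).
have [h1 h2] := lin_bound HM (lf_s f) hb'.
split => //.
by exists y.
Qed.

Lemma linval_dcl n (f : Defs.linfun M n) (B A : M -> Prop) (C' : ('I_n -> M) -> Prop) (a : 'I_n -> M) v :
  is_Blin B C' f -> (forall y, B y -> A y) -> A 0 -> (forall i, A (a i)) -> linval f a v -> dcl A v.
Proof.
move=> [kp _ hg _] BA A0 Aa [ya [hya ->]].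
apply: dcl_add; last by apply: dcl_mono hg.
apply: dcl_big; first exact: dcl_in.
move=> i; apply: dcl_zmul; apply: (dcl_div HM (kp i) (hya i)); exact: dcl_in.
Qed.


Definition generic (M0 : M -> Prop) n (a : 'I_n -> M) :=
  forall i, ~ dcl (fun x => M0 x \/ exists j, j != i /\ x = a j) (a i).

Lemma generic_init M0 n (a : 'I_n.+1 -> M) : generic M0 a -> generic M0 (tinit a).
Proof.
move=> g i h; apply: (g (widen_ord (leqnSn n) i)); apply: dcl_mono h => x [h|[j [hj ->]]].
  by left.
by right; exists (widen_ord (leqnSn n) j); split.
Qed.

Lemma main_claim (M0 : M -> Prop) (D : M) : M0 0 -> nonstd D ->
  forall n s (C : ('I_n -> M) -> Prop), cell M0 s C -> all id s ->
  forall a, C a -> generic M0 a ->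
  exists d (N c : nat -> nat), [/\ nonstd d,
     forall i : 'I_n, [/\ (0 < N i)%N, (c i < N i)%N & p_cong (N i) (a i) (cst M (c i))] &
     forall x, (forall i : 'I_n, [/\ a i - d <= x i, x i <= a i + d & p_cong (N i) (x i) (cst M (c i))]) -> C x].
Proof.
move=> M00 hD n s C hC; elim: hC => {n s C}.
- move=> _ a _ _; exists D, (fun _ => 1%N), (fun _ => 0%N); split => //; by case.
- by move=> n s C f _ _ _; rewrite all_rcons.
move=> n s C al be lo hi N k hC IH bal bbe Np kN _.
rewrite all_rcons /= => hs a [Ca sa] ga.
have [d' [N' [c' [hd' hNa hbox]]]] := IH hs _ Ca (generic_init ga).
set A := fun x => M0 x \/ exists j, j != ord_max /\ x = a j.
have hw : ~ dcl A (tlast a) := ga ord_max.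
have A0 : A 0 by left.
have Aa : forall i, A (tinit a i).
  move=> i; right; exists (widen_ord (leqnSn n) i); split=> //.
  by rewrite -(inj_eq val_inj) /= neq_ltn ltn_ord.
have BA : forall y, M0 y -> A y by move=> y h; left.
case: sa => slo shi scong.
have [qlo [hqlo Hlo]] : exists q, nonstd q /\ (lo -> exists v,
    [/\ linval al (tinit a) v, v <= tlast a & nmul (Sf al).+1 q <= tlast a - v]).
  case: lo slo => [/(_ isT) [v [lv hv]] | _]; last by exists D.
  have dv := linval_dcl bal BA A0 Aa lv.
  have g : nonstd (tlast a - v) by move=> m; apply: (m_gap HM); apply: (gap_lo HM dv hw hv).
  have [q [hq hq2]] := nonstd_div HM (ltn0Sn (Sf al)) g.
  by exists q; split=> // _; exists v.
have [qhi [hqhi Hhi]] : exists q, nonstd q /\ (hi -> exists v,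
    [/\ linval be (tinit a) v, tlast a <= v & nmul (Sf be).+1 q <= v - tlast a]).
  case: hi shi => [/(_ isT) [v [lv hv]] | _]; last by exists D.
  have dv := linval_dcl bbe BA A0 Aa lv.
  have g : nonstd (v - tlast a) by move=> m; apply: (m_gap HM); apply: (gap_hi HM dv hw hv).
  have [q [hq hq2]] := nonstd_div HM (ltn0Sn (Sf be)) g.
  by exists q; split=> // _; exists v.
have [d1 [hd1 d1a d1b]] := nonstd_min HM hd' hqlo.
have [d [hd dd1 dc]] := nonstd_min HM hd1 hqhi.
have dd' := m_le_trans HM dd1 d1a.
have dlo := m_le_trans HM dd1 d1b.
exists d, (fun j => if (j < n)%N then N' j else N), (fun j => if (j < n)%N then c' j else k).
split => //.
  move=> i; case: (ltnP i n) => hi'.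
    have := hNa (Ordinal hi'); rewrite /tinit /=.
    by have -> : widen_ord (leqnSn n) (Ordinal hi') = i by apply: val_inj.
  have -> : i = ord_max by apply: val_inj => /=; have := ltn_ord i; lia.
  by split.
move=> x hx.
have hx' : forall i : 'I_n, [/\ tinit a i - d' <= tinit x i, tinit x i <= tinit a i + d'
    & p_cong (N' i) (tinit x i) (cst M (c' i))].
  move=> i; have [h1 h2 h3] := hx (widen_ord (leqnSn n) i); rewrite /= ltn_ord in h3.
  by have [h4 h5] := m_box_mono HM dd' h1 h2; split.
have Cx := hbox _ hx'.
have [h1 h2 h3] := hx ord_max; rewrite /= ltnn in h3.
have hb : forall i, tinit a i - d <= tinit x i /\ tinit x i <= tinit a i + d.
  by move=> i; have [] := hx (widen_ord (leqnSn n) i).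
split => //; split => //.
- move=> hlo; have [v [lv hv hq]] := Hlo hlo.
  have [v' [Sa [Sx [lv' ev ev' b1 b2]]]] := linval_near bal Cx lv hb.
  exists v'; split => //; rewrite ev'.
  apply: (m_final_lo HM b1 b2 _ h1).
  rewrite -ev; change (nmul (Sf al).+1 d <= tlast a - v).
  exact: m_le_trans (m_nmul_mono HM _ dlo) hq.
- move=> hhi; have [v [lv hv hq]] := Hhi hhi.
  have [v' [Sa [Sx [lv' ev ev' b1 b2]]]] := linval_near bbe Cx lv hb.
  exists v'; split => //; rewrite ev'.
  apply: (m_final_hi HM b1 b2 _ h2).
  rewrite -ev; change (nmul (Sf be).+1 d <= v - tlast a).
  exact: m_le_trans (m_nmul_mono HM _ dc) hq.
Qed.

End Main.


Lemma inf_lo (M : PStruct) (HM : IsPresModel M) (d a : M) : nonstd d ->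
  infinite_set (fun x => p_le (@p_sub M a d) x /\ p_le x a).
Proof.
move=> hd m H; apply: (H (fun j : 'I_m.+1 => @p_sub M a (cst M j))).
  move=> j1 j2 h; apply/val_inj; case: (ltngtP j1 j2) => // hlt; exfalso.
    exact: (m_sub_inj HM h (m_cst_lt HM hlt)).
  exact: (m_sub_inj HM (esym h) (m_cst_lt HM hlt)).
move=> j; exact: (m_box_lo HM a (hd j) (m_cst_nonneg HM j)).
Qed.

Lemma inf_hi (M : PStruct) (HM : IsPresModel M) (d a : M) : nonstd d ->
  infinite_set (fun x => p_le a x /\ p_le x (@p_add M a d)).
Proof.
move=> hd m H; apply: (H (fun j : 'I_m.+1 => @p_add M a (cst M j))).
  move=> j1 j2 h; apply/val_inj; case: (ltngtP j1 j2) => // hlt; exfalso.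
    exact: (m_add_inj HM h (m_cst_lt HM hlt)).
  exact: (m_add_inj HM (esym h) (m_cst_lt HM hlt)).
move=> j; exact: (m_box_hi HM a (hd j) (m_cst_nonneg HM j)).
Qed.

Unset Implicit Arguments.
Theorem lemma3p4 (M : PStruct) (M0 : M -> Prop) (n : nat)
    (C : ('I_n -> M) -> Prop) (a : 'I_n -> M) :
  IsPresModel M -> Saturated M ->
  elem_sub M0 -> small M0 ->
  open_cell M0 C -> C a -> dim_eq M0 a n ->
  exists Bx : ('I_n -> M) -> Prop, box_around a Bx /\ (forall x, Bx x -> C x).
Proof.
move=> HM _ [[M00 _ _ _] _] _ oC Ca [S [ind _ cS]].
have ST : S = setT.
  apply/eqP; rewrite eqEcard subsetT cardsT card_ord cS leqnn //.
have ga : generic M0 a.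
  move=> i; have := ind i; rewrite ST in_setT => /(_ isT) h1 h2; apply: h1.
  apply: dcl_mono h2 => x [h|[j [hj ->]]]; first by left.
  by right; exists j; split => //; rewrite in_setT.
case: n C a oC Ca S ind cS ST ga => [|n] C a oC Ca S ind cS ST ga.
  exists (fun _ => True); split.
    exists a, a, (fun _ => false), (fun _ => false), (fun _ => 1%N), (fun _ => 0%N).
    split; try by case.
    by move=> x; split => // _; case.
  move=> x _; have -> : x = a by apply: functional_extensionality; case.
  exact: Ca.
have [D hD] : exists D : M, nonstd D.
  have hw := ga ord0.
  set A := (fun x => M0 x \/ exists j, j != ord0 /\ x = a j) in hw.
  have d0 : dcl A (@p_zero M) by apply: dcl_in; left.
  case: (m_total HM (@p_zero M) (a ord0)) => h.
    exists (@p_sub M (a ord0) (@p_zero M)) => m; apply: (m_gap HM).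
    by apply: (gap_lo HM d0 hw); left.
  exists (@p_sub M (@p_zero M) (a ord0)) => m; apply: (m_gap HM).
  exact: (gap_hi HM d0 hw h).
have [d [N [c [hd hNa hbox]]]] := main_claim HM M00 hD oC (all_nseq _ _ _) Ca ga.
exists (fun x => forall i, [/\ true -> p_le (@p_sub M (a i) d) (x i), true -> p_le (x i) (@p_add M (a i) d)
   & p_cong (N i) (x i) (cst M (c i))]).
split.
  exists (fun i => @p_sub M (a i) d), (fun i => @p_add M (a i) d), (fun _ => true), (fun _ => true),
    (fun i => N i), (fun i => c i).
  split.
  - by move=> i; have [] := hNa i.
  - move=> i; have [_ _ h] := hNa i; have [h1 h2] := m_box_mem HM (a i) (hd 0%N).
    by split.
  - by move=> i _; apply: inf_lo.
  - by move=> i _; apply: inf_hi.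
  - by [].
move=> x hx; apply: hbox => i; have [h1 h2 h3] := hx i.
by split => //; [apply: h1 | apply: h2].
Qed.
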